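(* Let $V$ be a finite nonempty set, $c\in\mathbb{R}^{P_V}$, $\hat x$ a maximally specific partial function on $P_V$, $U\subseteq V$, and $ij\in (U\times(V\setminus U))\setminus\operatorname{dom}(\hat x)$. If $(U\times(V\setminus U))\cap\hat x^{-1}(1)=\emptyset$ and $$c_{ij}^-\ \ge \sum_{pq\in (U\times(V\setminus U))\setminus\hat x^{-1}(0)} c_{pq}^+,$$ then there is a maximizer $x^*$ of $\varphi_c$ over $X_V[\hat x]$ with $x^*_{ij}=0$.
   Context: $P_V=\{pq\in V^2\mid p\neq q\}$; $X_V$ is the set of $x\in\{0,1\}^{P_V}$ with $x_{pq}+x_{qr}-x_{pr}\le 1$ for all pairwise distinct $p,q,r\in V$; $\varphi_c(x)=\sum_{pq\in P_V}c_{pq}x_{pq}$. A partial function $\tilde x$ is a map from $\operatorname{dom}(\tilde x)\subseteq P_V$ to $\{0,1\}$, $\tilde x^{-1}(b)$ the pairs mapped to $b$, and $X_V[\tilde x]=\{x\in X_V\mid x_{pq}=\tilde x_{pq}\ \forall pq\in\operatorname{dom}(\tilde x)\}$. A pair $pq$ is decided if $x_{pq}=x'_{pq}$ for all $x,x'\in X_V[\tilde x]$; $\tilde x$ is maximally specific if $X_V[\tilde x]\ne\emptyset$ and the decided pairs are exactly $\operatorname{dom}(\tilde x)$. For real $a$: $a^+=\max(a,0)$, $a^-=\max(-a,0)$. *)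

(* Defs.v *)
From HB Require Import structures.
From mathcomp Require Import all_boot all_order all_algebra.
Set Implicit Arguments. Unset Strict Implicit. Unset Printing Implicit Defensive.
Import Order.TTheory GRing.Theory Num.Theory.
Local Open Scope ring_scope.

Definition PV (V : finType) : pred (V * V) := fun pq => pq.1 != pq.2.

(* A 0/1 vector x in {0,1}^{P_V}: represented as a boolean finite function on
   V * V; entries on the diagonal are fixed to false so that vectors are in
   bijection with {0,1}^{P_V}. *)
Definition is_vec (V : finType) (x : {ffun V * V -> bool}) : bool :=
  [forall p : V, ~~ x (p, p)].

Definition in_XV (V : finType) (x : {ffun V * V -> bool}) : bool :=
  is_vec x &&
  [forall p : V, forall q : V, forall r : V,
     [&& p != q, q != r & p != r] ==>
       ((x (p, q) : nat) + x (q, r) <= 1 + x (p, r))%N].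

Definition phi (R : numDomainType) (V : finType) (c : V * V -> R)
  (x : {ffun V * V -> bool}) : R :=
  \sum_(pq : V * V | PV pq) c pq * (x pq)%:R.

Definition partial_fun (V : finType) (xt : {ffun V * V -> option bool}) : bool :=
  [forall pq : V * V, (xt pq != None) ==> PV pq].

Definition in_dom (V : finType) (xt : {ffun V * V -> option bool}) (pq : V * V) : bool :=
  xt pq != None.

Definition in_XV_restr (V : finType) (xt : {ffun V * V -> option bool})
  (x : {ffun V * V -> bool}) : Prop :=
  in_XV x /\ forall pq b, xt pq = Some b -> x pq = b.

Definition decided (V : finType) (xt : {ffun V * V -> option bool}) (pq : V * V) : Prop :=
  forall x x', in_XV_restr xt x -> in_XV_restr xt x' -> x pq = x' pq.

Definition maximally_specific (V : finType) (xt : {ffun V * V -> option bool}) : Prop :=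
  partial_fun xt /\
  (exists x, in_XV_restr xt x) /\
  (forall pq, PV pq -> (decided xt pq <-> in_dom xt pq)).

Definition pospart (R : realDomainType) (a : R) : R := Num.max a 0.
Definition negpart (R : realDomainType) (a : R) : R := Num.max (- a) 0.

(* Main.v *)
Require Import Defs.
From HB Require Import structures.
From mathcomp Require Import all_boot all_order all_algebra.
From mathcomp Require Import lra.
Set Implicit Arguments. Unset Strict Implicit. Unset Printing Implicit Defensive.
Import Order.TTheory GRing.Theory Num.Theory.
Local Open Scope ring_scope.

Definition restrb (V : finType) (xh : {ffun V * V -> option bool})
  (x : {ffun V * V -> bool}) : bool :=
  in_XV x && [forall pq, if xh pq is Some b then x pq == b else true].

Lemma restrbP (V : finType) (xh : {ffun V * V -> option bool}) x :
  reflect (in_XV_restr xh x) (restrb xh x).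
Proof.
apply: (iffP andP) => -[H1 H2]; split => //.
  by move=> pq b E; move/forallP: H2 => /(_ pq); rewrite E => /eqP.
by apply/forallP => pq; case E: (xh pq) => [b|] //; rewrite (H2 _ _ E).
Qed.

Lemma exists_max (R : realFieldType) (V : finType) (c : V * V -> R)
  (xh : {ffun V * V -> option bool}) x0 :
  in_XV_restr xh x0 ->
  exists xm, in_XV_restr xh xm /\ forall x, in_XV_restr xh x -> phi c x <= phi c xm.
Proof.
move=> /restrbP H0.
case: (@arg_maxP _ R _ x0 (restrb xh) (phi c) H0) => xm Hm Hmax.
exists xm; split; first exact/restrbP.
by move=> x /restrbP Hx; apply: Hmax.
Qed.

Lemma pos_ge0 (R : realFieldType) (a : R) : 0 <= pospart a.
Proof. by rewrite /pospart le_max lexx orbT. Qed.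

Lemma mulx_le_pos (R : realFieldType) (a : R) (b : bool) : a * (b%:R) <= pospart a.
Proof. by case: b; rewrite ?mulr1 ?mulr0 /pospart le_max lexx ?orbT. Qed.

Lemma negpos (R : realFieldType) (a : R) : negpart a - pospart a = - a.
Proof.
rewrite /pospart /negpart /Num.max /Order.max.
by case: ltP => H1; case: ltP => H2; lra.
Qed.

Theorem proposition6p2 (R : realFieldType) (V : finType) (c : V * V -> R)
  (xh : {ffun V * V -> option bool}) (U : {set V}) (i j : V) :
  (0 < #|V|)%N ->
  maximally_specific xh ->
  i \in U -> j \notin U -> xh (i, j) = None ->
  (forall p q, p \in U -> q \notin U -> xh (p, q) != Some true) ->
  negpart (c (i, j)) >=
    \sum_(pq : V * V | [&& pq.1 \in U, pq.2 \notin U & xh pq != Some false])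
       pospart (c pq) ->
  exists xs : {ffun V * V -> bool},
    [/\ in_XV_restr xh xs,
        (forall x, in_XV_restr xh x -> phi c x <= phi c xs)
      & xs (i, j) = false].
Proof.
move=> _ [_ [[x0 Hx0] _]] iU jU xhij Hnt Hsum.
have [x [Hx Hxmax]] := exists_max c Hx0.
case Exij: (x (i, j)); last by exists x.
pose cut (pq : V * V) := (pq.1 \in U) && (pq.2 \notin U).
pose x' := [ffun pq => x pq && ~~ cut pq].
have Hx' : in_XV_restr xh x'.
  case: Hx => /andP [Hv Ht] Hagree; split.
    apply/andP; split.
      apply/forallP => p; rewrite ffunE.
      by move/forallP: Hv => /(_ p) /negbTE ->.
    apply/forallP => p; apply/forallP => q; apply/forallP => r.
    apply/implyP => Hd.
    move/forallP: Ht => /(_ p) /forallP /(_ q) /forallP /(_ r) /implyP /(_ Hd) Ht.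
    rewrite !ffunE /cut /=.
    case Epr: (x (p, r)) Ht; case: (x (p, q)); case: (x (q, r)) => //=;
      case: (p \in U); case: (q \in U); case: (r \in U) => //.
  move=> pq b E; rewrite ffunE.
  case Hc: (cut pq); last by rewrite andbT (Hagree _ _ E).
  rewrite andbF; case: b E => // E.
  move: Hc => /andP [H1 H2].
  by move: (Hnt _ _ H1 H2); rewrite -surjective_pairing E.
exists x'; split => //; last by rewrite ffunE /cut /= iU jU andbF.
move=> y Hy; apply: le_trans (Hxmax _ Hy) _.
rewrite /phi (bigID cut) [X in _ <= X](bigID cut) /=.
have -> : \sum_(i0 | PV i0 && cut i0) c i0 * (x' i0)%:R = 0.
  by apply: big1 => pq /andP [_ Hc]; rewrite ffunE Hc andbF mulr0.
have -> : \sum_(i0 | PV i0 && ~~ cut i0) c i0 * (x' i0)%:R =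
          \sum_(i0 | PV i0 && ~~ cut i0) c i0 * (x i0)%:R.
  by apply: eq_bigr => pq /andP [_ Hc]; rewrite ffunE (negbTE Hc) andbT.
rewrite add0r gerDr.
have Pij : PV (i, j) && cut (i, j).
  rewrite /PV /cut /= iU jU !andbT.
  by apply/eqP => E; move: iU jU; rewrite E => ->.
rewrite (bigD1 (i, j) Pij) /= Exij mulr1.
have Sij : [&& (i, j).1 \in U, (i, j).2 \notin U & xh (i, j) != Some false].
  by rewrite /= iU jU xhij.
move: Hsum; rewrite (bigD1 (i, j) Sij) /= => Hsum.
set T := \sum_(pq | [&& pq.1 \in U, pq.2 \notin U & xh pq != Some false] && (pq != (i, j))) pospart (c pq).
have HT : \sum_(i0 | (PV i0 && cut i0) && (i0 != (i, j))) c i0 * (x i0)%:R <= T.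
  rewrite /T big_mkcond [X in _ <= X]big_mkcond /=.
  apply: ler_sum => pq _.
  case: Hx => _ Hagree.
  case: ifP => [/andP [/and3P [_ H1 H2] Hne] | _]; last first.
    by case: ifP => _ //; exact: pos_ge0.
  rewrite H1 H2 Hne /=.
  case E: (xh pq) => [[|]|] /=; last exact: mulx_le_pos.
    exact: mulx_le_pos.
  by rewrite (Hagree _ _ E) mulr0.
apply: le_trans (lerD (lexx _) HT) _.
have HS : pospart (c (i, j)) + T <= negpart (c (i, j)) := Hsum.
have := negpos (c (i, j)); lra.
Qed.
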